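(* For all nonnegative integers $s$ and $n$, $$\det\Big(W^*_{m,r}[s+i+j,\,s+j]_q\Big)_{0\le i,j\le n}=\prod_{k=0}^{n}[m(s+k)+r]_q^{\,k}.$$
   Context: Fix a real number $q>0$ with $q\neq 1$, a positive integer $m$ and a complex number $r$. For complex $x$ put $q^x=e^{x\ln q}$ and $[x]_q=\frac{1-q^x}{1-q}$. The numbers $W_{m,r}[n,k]_q$, for integers $n,k$, are defined by $W_{m,r}[0,0]_q=1$, $W_{m,r}[n,k]_q=0$ whenever $n<k$ or $n<0$ or $k<0$, and, for $n\ge 1$ and $0\le k\le n$, $$W_{m,r}[n,k]_q=q^{m(k-1)+r}\,W_{m,r}[n-1,k-1]_q+[mk+r]_q\,W_{m,r}[n-1,k]_q .$$ Further, $W^*_{m,r}[n,k]_q=q^{-m\binom{k}{2}-kr}\,W_{m,r}[n,k]_q$ for $n,k\ge 0$. *)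

(* Defs.v *)
(* The complex numbers are built here as pairs of Stdlib reals and equipped
   with a MathComp comNzRingType structure so that MathComp's \det applies. *)
From Stdlib Require Import Reals Lra ClassicalEpsilon FunctionalExtensionality.
From HB Require Import structures.
From mathcomp Require Import all_boot all_order all_algebra.
Set Implicit Arguments. Unset Strict Implicit. Unset Printing Implicit Defensive.

Record Cpx : Type := mkC { Re : R ; Im : R }.

Definition Ceqb (x y : Cpx) : bool :=
  if Req_EM_T (Re x) (Re y) then (if Req_EM_T (Im x) (Im y) then true else false)
  else false.

Lemma Ceqb_axiom : Equality.axiom Ceqb.
Proof.
move=> [a b] [c d]; rewrite /Ceqb /=.
case: (Req_EM_T a c) => [e1|h]; last by constructor; case.
case: (Req_EM_T b d) => [e2|h]; last by constructor; case.
by constructor; rewrite e1 e2.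
Qed.
HB.instance Definition _ := hasDecEq.Build Cpx Ceqb_axiom.

Definition Cfind (P : pred Cpx) (n : nat) : option Cpx :=
  match excluded_middle_informative (exists x, P x) with
  | left h => Some (proj1_sig (constructive_indefinite_description _ h))
  | right _ => None
  end.

Lemma Cfind_correct P n x : Cfind P n = Some x -> P x.
Proof.
rewrite /Cfind; case: excluded_middle_informative => // h [<-].
exact: proj2_sig (constructive_indefinite_description _ h).
Qed.

Lemma Cfind_complete (P : pred Cpx) : (exists x, P x) -> exists n, Cfind P n.
Proof. by move=> h; exists 0%N; rewrite /Cfind; case: excluded_middle_informative. Qed.

Lemma Cfind_ext (P Q : pred Cpx) : P =1 Q -> Cfind P =1 Cfind Q.
Proof. by move=> /functional_extensionality ->. Qed.

HB.instance Definition _ :=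
  hasChoice.Build Cpx Cfind_correct Cfind_complete Cfind_ext.

Definition Czero : Cpx := mkC R0 R0.
Definition Cone : Cpx := mkC R1 R0.
Definition Cadd (x y : Cpx) : Cpx := mkC (Rplus (Re x) (Re y)) (Rplus (Im x) (Im y)).
Definition Copp (x : Cpx) : Cpx := mkC (Ropp (Re x)) (Ropp (Im x)).
Definition Cmul (x y : Cpx) : Cpx :=
  mkC (Rminus (Rmult (Re x) (Re y)) (Rmult (Im x) (Im y)))
      (Rplus (Rmult (Re x) (Im y)) (Rmult (Im x) (Re y))).

Lemma CaddA : associative Cadd.
Proof. move=> [a b] [c d] [e f]; rewrite /Cadd /=; f_equal; ring. Qed.
Lemma CaddC : commutative Cadd.
Proof. move=> [a b] [c d]; rewrite /Cadd /=; f_equal; ring. Qed.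
Lemma Cadd0 : left_id Czero Cadd.
Proof. move=> [a b]; rewrite /Cadd /=; f_equal; ring. Qed.
Lemma CaddN : left_inverse Czero Copp Cadd.
Proof. move=> [a b]; rewrite /Cadd /Czero /=; f_equal; ring. Qed.
HB.instance Definition _ := GRing.isZmodule.Build Cpx CaddA CaddC Cadd0 CaddN.

Lemma CmulA : associative Cmul.
Proof. move=> [a b] [c d] [e f]; rewrite /Cmul /=; f_equal; ring. Qed.
Lemma CmulC : commutative Cmul.
Proof. move=> [a b] [c d]; rewrite /Cmul /=; f_equal; ring. Qed.
Lemma Cmul1 : left_id Cone Cmul.
Proof. move=> [a b]; rewrite /Cmul /=; f_equal; ring. Qed.
Lemma CmulDl : left_distributive Cmul Cadd.
Proof. move=> [a b] [c d] [e f]; rewrite /Cmul /Cadd /=; f_equal; ring. Qed.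
Lemma Cone_neq0 : Cone != Czero.
Proof.
apply/negP => /eqP [] h; exact: R1_neq_R0 h.
Qed.
HB.instance Definition _ :=
  GRing.Zmodule_isComNzRing.Build Cpx CmulA CmulC Cmul1 CmulDl Cone_neq0.

Definition RtoC (a : R) : Cpx := mkC a R0.

(* q^x = e^{x ln q} for complex x:
   e^{(a+ib) ln q} = e^{a ln q} (cos (b ln q) + i sin (b ln q)). *)
Definition qpow (q : R) (x : Cpx) : Cpx :=
  mkC (Rmult (exp (Rmult (Re x) (ln q))) (cos (Rmult (Im x) (ln q))))
      (Rmult (exp (Rmult (Re x) (ln q))) (sin (Rmult (Im x) (ln q)))).

Definition qint (q : R) (x : Cpx) : Cpx :=
  GRing.mul (RtoC (Rinv (Rminus R1 q))) (GRing.add Cone (GRing.opp (qpow q x))).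

Local Open Scope ring_scope.

(* W_{m,r}[n,k]_q for n, k >= 0 (it is 0 whenever an index is negative, so the
   terms W[n-1,k-1] with k = 0 of the recurrence vanish). *)
Fixpoint W (q : R) (m : nat) (r : Cpx) (n k : nat) {struct n} : Cpx :=
  match n, k with
  | 0, 0 => 1
  | 0, _.+1 => 0
  | n'.+1, 0 => qint q (m%:R * 0%:R + r) * W q m r n' 0
  | n'.+1, k'.+1 =>
      if (n'.+1 < k'.+1)%N then 0
      else qpow q (m%:R * k'%:R + r) * W q m r n' k'
           + qint q (m%:R * k'.+1%:R + r) * W q m r n' k'.+1
  end.

Definition Wstar (q : R) (m : nat) (r : Cpx) (n k : nat) : Cpx :=
  qpow q (- (m%:R * 'C(k, 2)%:R) - k%:R * r) * W q m r n k.

(* Main.v *)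
Require Import Defs.
From Stdlib Require Import Reals.
From HB Require Import structures.
From mathcomp Require Import all_boot all_order all_algebra.
Import GRing.Theory.
Local Open Scope ring_scope.

Lemma qpowD q x y : qpow q (x + y) = qpow q x * qpow q y.
Proof.
change (qpow q (Cadd x y) = Cmul (qpow q x) (qpow q y)).
case: x => a b; case: y => c d; rewrite /qpow /Cadd /Cmul /=.
rewrite !Rmult_plus_distr_r exp_plus cos_plus sin_plus.
f_equal; ring.
Qed.

Lemma qpow0 q : qpow q 0 = 1.
Proof.
change (qpow q Czero = Cone).
rewrite /qpow /Czero /Cone /= !Rmult_0_l exp_0 cos_0 sin_0.
f_equal; ring.
Qed.

From mathcomp Require Import ring.
Section Gen.
Variable K : comNzRingType.
Variable a : nat -> K.

Fixpoint T (n k : nat) : K :=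
 match n, k with
 | 0, 0 => 1 | 0, _.+1 => 0
 | n'.+1, 0 => a 0%N * T n' 0
 | n'.+1, k'.+1 => T n' k' + a k'.+1 * T n' k'.+1 end.

Fixpoint P (l p k : nat) : K :=
 match p with
 | 0 => (l == k)%:R
 | p'.+1 => (if k is k'.+1 then P l p' k' else 0) + a k * P l p' k end.

Lemma T_gt n k : (n < k)%N -> T n k = 0.
Proof.
elim: n k => [|n IH] [|k] //= h.
rewrite (IH k) // (IH k.+1) ?mulr0 ?addr0 //; exact: ltnW.
Qed.

Lemma T_diag n : T n n = 1.
Proof. by elim: n => //= n IH; rewrite IH T_gt // mulr0 addr0. Qed.

Lemma P_lt l p k : (k < l)%N -> P l p k = 0.
Proof.
elim: p k => [|p IH] k h /=; first by rewrite eq_sym (ltn_eqF h).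
rewrite IH // mulr0 addr0; case: k h => // k h; apply: IH; exact: ltnW.
Qed.

Lemma P_gt l p k : (l + p < k)%N -> P l p k = 0.
Proof.
elim: p k => [|p IH] k h /=; first by rewrite addn0 in h; rewrite (ltn_eqF h).
rewrite IH ?mulr0 ?addr0; last by rewrite addnS in h; apply: ltnW.
case: k h => // k h; apply: IH; by rewrite addnS in h.
Qed.

Lemma P_diag l p : P l p l = a l ^+ p.
Proof.
elim: p => [|p IH] /=; first by rewrite eqxx.
rewrite IH exprS; case: l IH => [|l] IH; first by rewrite add0r.
by rewrite P_lt // add0r.
Qed.

Lemma conv N n p k : (n < N)%N ->
  T (n + p) k = \sum_(l < N) T n l * P l p k.
Proof.
move=> hN; elim: p k => [|p IH] k.
  rewrite addn0 /=.
  case: (ltnP k N) => hk.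
    rewrite (bigD1 (Ordinal hk)) //= eqxx mulr1 big1 ?addr0 // => i hi.
    have -> : (i == k :> nat) = false.
      by apply/negP => /eqP e; move: hi; rewrite -(inj_eq val_inj) /= e eqxx.
    by rewrite mulr0.
  rewrite T_gt; last by apply: leq_trans hN hk.
  rewrite big1 // => i _; rewrite (_ : (i == k :> nat) = false) ?mulr0 //.
  apply/negP => /eqP e; move: (ltn_ord i); rewrite e ltnNge hk.
  done.
rewrite addnS; case: k => [|k] /=.
  rewrite IH mulr_sumr; apply: eq_bigr => i _; ring.
rewrite !IH mulr_sumr -big_split; apply: eq_bigr => i _ /=; ring.
Qed.

Theorem gen_det s n :
  \det (\matrix_(i < n.+1, j < n.+1) T (s + i + j) (s + j) : 'M[K]_n.+1)
  = \prod_(k < n.+1) a (s + k) ^+ k.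
Proof.
set B := \matrix_(i < n.+1, t < n.+1) T (s + i) (s + t).
set C := \matrix_(t < n.+1, j < n.+1) P (s + t) j (s + j).
have -> : (\matrix_(i < n.+1, j < n.+1) T (s + i + j) (s + j) : 'M[K]_n.+1) = B *m C.
  apply/matrixP => i j; rewrite !mxE.
  rewrite (@conv (s + n.+1)); last by rewrite ltn_add2l.
  rewrite big_split_ord /= big1 ?add0r.
    by apply: eq_bigr => t _; rewrite !mxE.
  move=> l _; rewrite P_gt ?mulr0 //= ltn_add2r; exact: ltn_ord.
rewrite det_mulmx -(det_tr C) (det_trig (A := B)); last first.
  apply/is_trig_mxP => i j h; rewrite mxE T_gt // ltn_add2l //.
rewrite det_trig; last first.
  apply/is_trig_mxP => i j h; rewrite !mxE P_lt // ltn_add2l //.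
rewrite big1 ?mul1r; last by move=> i _; rewrite mxE T_diag.
by apply: eq_bigr => i _; rewrite !mxE P_diag.
Qed.
End Gen.
Arguments T {K}.
Arguments P {K}.
Arguments gen_det {K}.
Lemma Wstar_T q m r n k :
  Wstar q m r n k = T (fun k => qint q (m%:R * k%:R + r)) n k.
Proof.
elim: n k => [|n IH] [|k].
- by rewrite /Wstar /= mulr1 bin0n mulr0 oppr0 mul0r subr0 qpow0.
- by rewrite /Wstar /= mulr0.
- rewrite /= -IH /Wstar /=; ring.
- rewrite [RHS]/= -(IH k) -(IH k.+1) {1}/Wstar /=; case: ifP => h.
    by rewrite mulr0 !IH !T_gt ?mulr0 ?addr0 //; apply: ltnW.
  rewrite /Wstar mulrDr mulrA -qpowD; congr (qpow q _ * _ + _); last by ring.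
  rewrite binS bin1 natrD; ring.
Qed.
Theorem theorem7 (q : R) (hq0 : Rlt R0 q) (hq1 : q <> R1)
  (m : nat) (hm : (0 < m)%N) (r : Cpx) (s n : nat) :
  \det (\matrix_(i < n.+1, j < n.+1) Wstar q m r (s + i + j) (s + j)
          : 'M[Cpx]_n.+1)
  = \prod_(k < n.+1) qint q (m%:R * (s + k)%:R + r) ^+ k.
Proof.
have -> : (\matrix_(i < n.+1, j < n.+1) Wstar q m r (s + i + j) (s + j) : 'M[Cpx]_n.+1)
  = \matrix_(i < n.+1, j < n.+1) T (fun k => qint q (m%:R * k%:R + r)) (s + i + j) (s + j).
  by apply/matrixP => i j; rewrite !mxE Wstar_T.
rewrite (gen_det (fun k => qint q (m%:R * k%:R + r))).
done.
Qed.
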